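(* For every $n\in\mathbb{N}$ there exists an oriented ordered graph $\overrightarrow{G}$ on $2n$ vertices in which every vertex has degree $1$, which contains no oriented ordered subgraph $\overrightarrow{M}_2$ and no oriented ordered subgraph $\overrightarrow{P}_3$, and which satisfies $\overrightarrow{\chi}(\overrightarrow{G})=n+1$.
   Context: An ordered graph is a finite simple undirected graph with a linear order on its vertices. An oriented ordered graph $\overrightarrow{G}$ is an ordered graph in which each edge is given exactly one direction. An ordered homomorphism between oriented ordered graphs is a vertex map $f$ with $f(u)\le f(v)$ whenever $u\le v$ and such that $(f(u),f(v))$ is an arc of the target whenever $(u,v)$ is an arc; the target is itself an oriented ordered graph (so it has no pair of opposite arcs). The oriented ordered colouring $\overrightarrow{\chi}(\overrightarrow{G})$ is the minimum number of vertices of an oriented ordered graph $H$ admitting an ordered homomorphism $\overrightarrow{G}\to H$. $\overrightarrow{M}_2$ denotes the ordered matching $M_2$ (vertices $a_1<b_1<a_2<b_2$, edges $\{a_1,b_1\},\{a_2,b_2\}$) with any orientation of its edges, and $\overrightarrow{P}_3$ denotes the ordered path $P_3$ (vertices $v_1<v_2<v_3$, edges $\{v_1,v_2\},\{v_2,v_3\}$) with any orientation of its edges; containing one as a subgraph means there is an injective order-preserving vertex map sending arcs to arcs. *)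

(* Defs.v *)
From mathcomp Require Import all_boot.
Set Implicit Arguments. Unset Strict Implicit. Unset Printing Implicit Defensive.

(* An oriented ordered graph on N vertices: vertex set 'I_N with the natural
   linear order; arcs form an irreflexive relation with no pair of opposite
   arcs (so the underlying undirected graph is simple and each edge gets
   exactly one direction). *)
Record ograph (N : nat) := OGraph {
  arc :> rel 'I_N;
  arc_irr : irreflexive arc;
  arc_asym : forall u v, arc u v -> ~~ arc v u }.

Definition edge N (G : ograph N) (u v : 'I_N) : bool := G u v || G v u.

Definition degree N (G : ograph N) (u : 'I_N) : nat := #|[set v | edge G u v]|.

Definition ord_hom N K (G : ograph N) (H : ograph K) (f : 'I_N -> 'I_K) : Prop :=
  (forall u v : 'I_N, (u <= v)%N -> (f u <= f v)%N) /\
  (forall u v : 'I_N, G u v -> H (f u) (f v)).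

Definition contains N M (G : ograph N) (H : ograph M) : Prop :=
  exists f : 'I_M -> 'I_N, injective f /\
    (forall u v : 'I_M, (u <= v)%N -> (f u <= f v)%N) /\
    (forall u v : 'I_M, H u v -> G (f u) (f v)).

Definition M2_edge (u v : 'I_4) : bool :=
  [|| ((u : nat) == 0) && ((v : nat) == 1), ((u : nat) == 1) && ((v : nat) == 0),
      ((u : nat) == 2) && ((v : nat) == 3) | ((u : nat) == 3) && ((v : nat) == 2)].

Definition P3_edge (u v : 'I_3) : bool :=
  [|| ((u : nat) == 0) && ((v : nat) == 1), ((u : nat) == 1) && ((v : nat) == 0),
      ((u : nat) == 1) && ((v : nat) == 2) | ((u : nat) == 2) && ((v : nat) == 1)].

Definition is_oM2 (H : ograph 4) : Prop := forall u v, edge H u v = M2_edge u v.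
Definition is_oP3 (H : ograph 3) : Prop := forall u v, edge H u v = P3_edge u v.

Definition no_M2 N (G : ograph N) : Prop :=
  forall H : ograph 4, is_oM2 H -> ~ contains G H.
Definition no_P3 N (G : ograph N) : Prop :=
  forall H : ograph 3, is_oP3 H -> ~ contains G H.

(* oriented ordered chromatic number of G equals k: the minimum number of
   vertices of an oriented ordered target admitting an ordered homomorphism.
   (Any finite linearly ordered target is isomorphic to some 'I_K.) *)
Definition ochi_eq N (G : ograph N) (k : nat) : Prop :=
  (exists (H : ograph k) (f : 'I_N -> 'I_k), ord_hom G H f) /\
  (forall K (H : ograph K) (f : 'I_N -> 'I_K), ord_hom G H f -> (k <= K)%N).

(* Main.v *)
Require Import Defs.
From mathcomp Require Import all_boot.
From mathcomp Require Import zify.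

Section C.
Variable n : nat.
Local Notation N := (2 * n).

Definition garc (u v : 'I_N) : bool :=
  ((u : nat) + v == N.-1) && (if (u < v)%N then ~~ odd u else odd v).

Lemma garc_irr : irreflexive garc.
Proof.
move=> u; apply/negP => /andP[/eqP h _].
have := ltn_ord u; lia.
Qed.

Lemma garc_asym u v : garc u v -> ~~ garc v u.
Proof.
rewrite /garc => /andP[/eqP h1 h2]; apply/negP => /andP[_ h3].
case: (ltngtP u v) h2 h3 => [uv|vu|/val_inj e] /=.
- by move=> /negP.
- by move=> ->.
- move=> _ _; have := ltn_ord u; rewrite e in h1 *; lia.
Qed.

Definition G : ograph N := OGraph garc_irr garc_asym.

Lemma edgeG (u v : 'I_N) : edge G u v = ((u : nat) + v == N.-1).
Proof.
rewrite /edge /= /garc [(v:nat) + u]addnC.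
case: eqP => //= h.
case: (ltngtP u v) => [uv|vu|e] /=; first by case: (odd u).
  by case: (odd v).
have := ltn_ord u; rewrite e in h *; lia.
Qed.

Lemma degG u : degree G u = 1%N.
Proof.
have hu := ltn_ord u.
have hp : (N.-1 - u < N)%N by lia.
rewrite /degree (_ : [set v | edge G u v] = [set Ordinal hp]) ?cards1 //.
apply/setP => v; rewrite !inE edgeG -val_eqE /=.
apply/eqP/eqP; lia.
Qed.

Lemma noP3 : no_P3 G.
Proof.
move=> H hH [f [finj [fmon farc]]].
have e : forall a b, edge H a b -> edge G (f a) (f b).
  by move=> a b; rewrite /edge => /orP[/farc -> | /farc ->] //; rewrite orbT.
have h10 : edge G (f (inord 1)) (f (inord 0)) by apply: e; rewrite hH /P3_edge !inordK.
have h12 : edge G (f (inord 1)) (f (inord 2)) by apply: e; rewrite hH /P3_edge !inordK.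
rewrite !edgeG in h10 h12; move/eqP: h10 => a; move/eqP: h12 => b.
have : f (inord 0) = f (inord 2) :> 'I_N by apply/val_inj => /=; lia.
move=> /finj /(congr1 val); rewrite /= !inordK //.
Qed.

Lemma noM2 : no_M2 G.
Proof.
move=> H hH [f [finj [fmon farc]]].
have e : forall a b, edge H a b -> edge G (f a) (f b).
  by move=> a b; rewrite /edge => /orP[/farc -> | /farc ->] //; rewrite orbT.
have h01 : edge G (f (inord 0)) (f (inord 1)) by apply: e; rewrite hH /M2_edge !inordK.
have h23 : edge G (f (inord 2)) (f (inord 3)) by apply: e; rewrite hH /M2_edge !inordK.
rewrite !edgeG in h01 h23; move/eqP: h23; move/eqP: h01.
have st : forall a b : 'I_4, (a < b)%N -> (f a < f b)%N.
  move=> a b ab; have le := fmon a b (ltnW ab).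
  rewrite ltn_neqAle le andbT; apply/negP => /eqP/val_inj/finj ea.
  by move: ab; rewrite ea ltnn.
have s1 : (f (inord 1) < f (inord 2))%N by apply: st; rewrite !inordK.
have s0 : (f (inord 0) < f (inord 1))%N by apply: st; rewrite !inordK.
have s2 : (f (inord 2) < f (inord 3))%N by apply: st; rewrite !inordK.
lia.
Qed.

Definition Harc (a b : 'I_n.+1) : bool :=
  ((a < n)%N && (b == n :> nat) && ~~ odd a) || ((b < n)%N && (a == n :> nat) && odd b).

Lemma Harc_irr : irreflexive Harc.
Proof. move=> a; rewrite /Harc; apply/negP; case/orP => /andP[/andP[h /eqP e] _]; lia. Qed.

Lemma Harc_asym a b : Harc a b -> ~~ Harc b a.
Proof.
rewrite /Harc => h; apply/negP; move: h.
case/orP => /andP[/andP[h1 /eqP e1] o1]; case/orP => /andP[/andP[h2 /eqP e2] o2]; lia.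
Qed.

Definition Ht : ograph n.+1 := OGraph Harc_irr Harc_asym.

Definition g (u : 'I_N) : 'I_n.+1 := inord (if (u < n)%N then (u : nat) else n).

Lemma g_val u : (g u : nat) = if (u < n)%N then (u : nat) else n.
Proof. rewrite /g inordK //; case: ifP => //; lia. Qed.

Lemma hom_g : ord_hom G Ht g.
Proof.
split.
  move=> u v uv; rewrite !g_val; do 2 case: ifP => //; lia.
move=> u v; rewrite /= /garc /Harc !g_val => /andP[/eqP s].
have hu := ltn_ord u; have hv := ltn_ord v.
case: (ltngtP u v) => [uv|vu|e] o.
- have h1 : (u < n)%N by lia.
  have h2 : (v < n)%N = false by apply/negbTE; lia.
  by rewrite h1 h2 h1 eqxx o.
- have h1 : (v < n)%N by lia.
  have h2 : (u < n)%N = false by apply/negbTE; lia.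
  by rewrite h1 h2 h1 eqxx o orbT.
- lia.
Qed.

Lemma lower (hn : (0 < n)%N) K (H : ograph K) (f : 'I_N -> 'I_K) :
  ord_hom G H f -> (n.+1 <= K)%N.
Proof.
move=> [fmon farc].
have h0 : (0 < N)%N by lia.
pose u0 : 'I_N := Ordinal h0.
pose V k : 'I_N := insubd u0 k.
have VE : forall k, (k < N)%N -> (V k : nat) = k.
  by move=> k hk; rewrite /V val_insubd hk.
pose F k := (f (V k) : nat).
have mon : forall k l, (k <= l)%N -> (l < N)%N -> (F k <= F l)%N.
  move=> k l kl lN; apply: fmon; rewrite !VE //; lia.
have ar : forall k, (k < n)%N ->
   (~~ odd k -> H (f (V k)) (f (V (N.-1 - k)))) /\ (odd k -> H (f (V (N.-1 - k))) (f (V k))).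
  move=> k kn; split => o; apply: farc; rewrite /= /garc !VE; try lia.
  - have -> : (k < N.-1 - k)%N by lia.
    rewrite o andbT; apply/eqP; lia.
  - have -> : (N.-1 - k < k)%N = false by apply/negbTE; lia.
    rewrite o andbT; apply/eqP; lia.
have key : forall j, (j < n)%N -> (F (n.-1 - j) + j + 1 <= F (n + j))%N.
  elim=> [|j IH] jn.
    have le : (F n.-1 <= F n)%N by apply: mon; lia.
    rewrite subn0 !addn0.
    suff : F n.-1 <> F n by lia.
    move=> e.
    have e' : f (V n.-1) = f (V n) by apply: val_inj.
    have eN : N.-1 - n.-1 = n by lia.
    have [a b] := ar n.-1 ltac:(lia).
    rewrite eN in a b.
    case: (odd n.-1) a b => [_ /(_ erefl)|/(_ erefl) h _]; first by rewrite e' arc_irr.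
    by move: h; rewrite e' arc_irr.
  have IH' := IH ltac:(lia).
  set k := n.-1 - j.+1.
  have k1 : n.-1 - j = k.+1 by rewrite /k; lia.
  rewrite k1 in IH'.
  have m1 : (F k <= F k.+1)%N by apply: mon; lia.
  have m2 : (F (n + j) <= F (n + j.+1))%N by apply: mon; lia.
  suff : ~ (F k = F k.+1 /\ F (n + j) = F (n + j.+1)) by lia.
  move=> [e1 e2].
  have e1' : f (V k) = f (V k.+1) by apply: val_inj.
  have e2' : f (V (N.-1 - k)) = f (V (N.-1 - k.+1)).
    have r1 : N.-1 - k = n + j.+1 by rewrite /k; lia.
    have r2 : N.-1 - k.+1 = n + j by rewrite /k; lia.
    by apply: val_inj; rewrite /= r1 r2.
  have [a b] := ar k ltac:(lia).
  have [c d] := ar k.+1 ltac:(lia).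
  rewrite -e1' -e2' /= in c d.
  case o: (odd k) a b c d => /= a b c d.
    by have := arc_asym (b erefl); rewrite (c erefl).
  by have := arc_asym (a erefl); rewrite (d erefl).
have := key n.-1 ltac:(lia).
rewrite subnn (_ : n + n.-1 = N.-1); last by lia.
have := ltn_ord (f (V N.-1)); rewrite /F; lia.
Qed.
End C.

Theorem proposition3 (n : nat) (hn : (0 < n)%N) :
  exists G : ograph (2 * n),
    (forall u, degree G u = 1%N) /\ no_M2 G /\ no_P3 G /\ ochi_eq G n.+1.
Proof.
exists (G n); split; first exact: degG.
split; first exact: noM2.
split; first exact: noP3.
split; first by exists (Ht n), (@g n); exact: hom_g.
move=> K H f hf; exact: lower hf.
Qed.
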